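(* Let $p$ be a prime and $n\ge1$. Let $N_n=\prod_{1\le h\le k\le n,\ \gcd(h,k)=1} h$ be the product of the numerators of all nonzero Farey fractions of order $n$ (each written in lowest terms). Then $$\mathrm{ord}_p(N_n)=\sum_{b=1}^{\lfloor\log_p n\rfloor}\ \sum_{a=1}^{\lfloor n/p^b\rfloor}\left(\varphi(ap^b)\Big(\Big\lfloor\frac{n}{ap^b}\Big\rfloor-1\Big)+\sum_{j\mid ap}\mu(j)\Big\lfloor\frac{d}{j}\Big\rfloor\right),$$ where, for each pair $(a,b)$, $d$ is the unique integer with $0\le d<ap^b$ and $d\equiv n\pmod{ap^b}$.
   Context: $\mathrm{ord}_p(m)$ is the exponent of the prime $p$ in the positive integer $m$; $\varphi$ is Euler's totient function, $\mu$ the M\''obius function, and the inner sum is over positive divisors $j$ of $ap$. *)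

(* Defs.v *)
From mathcomp Require Import all_boot all_order all_algebra.
Set Implicit Arguments. Unset Strict Implicit. Unset Printing Implicit Defensive.
Import Order.TTheory GRing.Theory Num.Theory.

(* Moebius function: mu 0 = 0 (convention, never used); for n > 0,
   mu n = (-1)^(number of prime factors) if n is squarefree, 0 otherwise. *)
Definition moebius (n : nat) : int :=
  if (0 < n)%N && all (fun q => logn q n == 1%N) (primes n)
  then ((-1) ^+ size (primes n))%R else 0%R.

Definition farey_num_prod (n : nat) : nat :=
  \prod_(1 <= k < n.+1) \prod_(1 <= h < k.+1 | coprime h k) h.

(* Main.v *)
Require Import Defs.
From mathcomp Require Import all_boot all_order all_algebra.
From mathcomp Require Import zify.
Import Order.TTheory GRing.Theory Num.Theory.

Lemma moebius1 : moebius 1 = 1%R.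
Proof. by []. Qed.

Lemma moebius_pM q j : prime q -> 0 < j -> ~~ (q %| j) ->
  moebius (q * j) = (- moebius j)%R.
Proof.
move=> qP j0 nqj; have q0 := prime_gt0 qP.
have pe : perm_eq (primes (q * j)) (q :: primes j).
  apply: uniq_perm; first exact: primes_uniq.
    by rewrite /= primes_uniq andbT mem_primes qP j0 nqj.
  by move=> x; rewrite primesM // in_cons primes_prime // inE.
rewrite /moebius muln_gt0 q0 j0 /= (perm_all _ pe) (perm_size pe) /=.
rewrite lognM // logn_prime // eqxx (logn_coprime (_ : coprime q j)); last first.
  by rewrite prime_coprime.
have -> : all (fun x => logn x (q * j) == 1) (primes j) =
          all (fun x => logn x j == 1) (primes j).
  apply: eq_in_all => x; rewrite mem_primes => /and3P[xP _ xj].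
  rewrite lognM // logn_prime //; case: (x =P q) => // exq.
  by rewrite -exq xj in nqj.
by case: (all _ _); rewrite ?oppr0 // exprS mulN1r.
Qed.

Lemma moebius_sq q t : prime q -> 0 < t -> moebius (q * (q * t)) = 0%R.
Proof.
move=> qP t0; have q0 := prime_gt0 qP.
rewrite /moebius; case: ifP => // /andP[_ /allP H].
have := H q; rewrite mem_primes qP !muln_gt0 q0 t0 dvdn_mulr //.
rewrite !lognM ?muln_gt0 ?q0 // logn_prime // eqxx => /(_ isT).
by rewrite add1n eqSS addn_eq0.
Qed.

Lemma sum_moebius g : 1 < g -> (\sum_(j <- divisors g) moebius j)%R = 0%R.
Proof.
move=> g1; have g0 : 0 < g by apply: ltnW.
set q := pdiv g; have qP : prime q := pdiv_prime g1.
have q0 := prime_gt0 qP; have qg : q %| g := pdiv_dvd g.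
have gq0 : 0 < g %/ q by rewrite divn_gt0 // dvdn_leq.
have ge : g = q * (g %/ q) by rewrite mulnC divnK.
rewrite (bigID (fun j => q %| j)) /=.
have -> : (\sum_(j <- divisors g | true && (q %| j)%N) moebius j =
    \sum_(i <- divisors (g %/ q)) moebius (q * i))%R.
  rewrite -big_filter -(big_map (fun i => q * i) xpredT).
  apply: perm_big; apply: uniq_perm.
  - by apply: filter_uniq; apply: divisors_uniq.
  - rewrite map_inj_uniq ?divisors_uniq // => x y /eqP.
    by rewrite eqn_pmul2l // => /eqP.
  move=> x; rewrite mem_filter /= -dvdn_divisors //.
  apply/andP/mapP => [[qx xg]|[i]].
    exists (x %/ q); last by rewrite mulnC divnK.
    rewrite -dvdn_divisors // -(@dvdn_pmul2l q) // -ge.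
    by rewrite mulnC divnK.
  rewrite -dvdn_divisors // => ig ->; split; first exact: dvdn_mulr.
  by rewrite {1}ge dvdn_pmul2l.
rewrite (bigID (fun j => q %| j)) /=.
rewrite big_seq_cond big1 ?add0r; last first.
  move=> i /andP[]; rewrite -dvdn_divisors // => ig /= qi.
  have i0 : 0 < i by apply: dvdn_gt0 ig.
  rewrite -(divnK qi) [_ * q]mulnC moebius_sq //.
  by rewrite divn_gt0 // dvdn_leq.
have -> : (\sum_(i <- divisors (g %/ q) | true && ~~ (q %| i)%N) moebius (q * i) =
     - \sum_(i <- divisors (g %/ q) | true && ~~ (q %| i)%N) moebius i)%R.
  rewrite -sumrN big_seq_cond [RHS]big_seq_cond; apply: eq_bigr.
  move=> i /andP[]; rewrite -dvdn_divisors // => ig /= nqi.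
  by rewrite moebius_pM // (dvdn_gt0 gq0 ig).
rewrite addrC; apply/eqP; rewrite subr_eq0; apply/eqP.
rewrite -big_filter -[RHS]big_filter; apply: perm_big.
apply: uniq_perm; try by apply: filter_uniq; apply: divisors_uniq.
move=> x; rewrite !mem_filter /=; case qx: (q %| x) => //=.
rewrite -!dvdn_divisors // {1}ge mulnC Gauss_dvdl // coprime_sym.
by rewrite prime_coprime // qx.
Qed.

Definition cnt m N := \sum_(1 <= k < N.+1) coprime m k.

Lemma cnt_base m : 0 < m -> cnt m m = totient m.
Proof.
move=> m0; rewrite /cnt totient_count_coprime big_nat_recr //.
rewrite [in RHS]big_ltn // /coprime gcdn0 gcdnn addnC.
by [].
Qed.

Lemma cnt_period m N : 0 < m -> cnt m (N + m) = cnt m N + totient m.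
Proof.
move=> m0; elim: N => [|N IH]; first by rewrite add0n cnt_base // /cnt big_geq.
rewrite addSn /cnt big_nat_recr // -/(cnt m (N + m)) IH.
rewrite [in RHS]big_nat_recr //= -/(cnt m N).
rewrite -[coprime m (N + m).+1]coprime_modr -addSn modnDr coprime_modr.
by rewrite addnAC.
Qed.

Lemma cnt_mul m q r : 0 < m -> cnt m (q * m + r) = q * totient m + cnt m r.
Proof.
move=> m0; elim: q => [|q IH]; first by rewrite !mul0n !add0n.
have -> : q.+1 * m + r = (q * m + r) + m by rewrite mulSn; lia.
by rewrite cnt_period // IH mulSn; lia.
Qed.

Lemma G_eq m n : 1 < m -> m <= n ->
  \sum_(1 <= k < n.+1) ((m <= k) && coprime m k) =
  totient m * (n %/ m - 1) + cnt m (n %% m).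
Proof.
move=> m1 mn; have m0 : 0 < m by apply: ltnW.
have c1 : cnt m n = cnt m m.-1 + \sum_(m <= k < n.+1) coprime m k.
  rewrite /cnt (@big_cat_nat _ _ _ m) // ?prednK //; lia.
have c2 : cnt m m.-1 = totient m.
  rewrite -cnt_base // /cnt -{3}(prednK m0) [in RHS]big_nat_recr /=; last lia.
  by rewrite prednK // /coprime gcdnn (gtn_eqF m1) addn0.
rewrite (@big_cat_nat _ _ _ m) //; last lia.
rewrite big_nat_cond big1 ?add0n; last first.
  by move=> k /andP[/andP[_ km]]; rewrite leqNgt km.
rewrite /= add0n.
under eq_big_nat => k /andP[mk _] do rewrite mk.
have : cnt m n = n %/ m * totient m + cnt m (n %% m).
  by rewrite {1}(divn_eq n m) cnt_mul.
rewrite c1 c2.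
have : 1 <= n %/ m by rewrite divn_gt0.
move: (\sum_(m <= i < n.+1) coprime m i) (cnt m (n %% m)) (n %/ m) (totient m).
move=> s c [|q] t // _; rewrite mulSn subn1 /= mulnC; lia.
Qed.

Lemma logn_prod (I : eqType) (r : seq I) (P : pred I) F p :
  (forall i, i \in r -> P i -> 0 < F i) ->
  logn p (\prod_(i <- r | P i) F i) = \sum_(i <- r | P i) logn p (F i).
Proof.
move=> H; rewrite big_seq_cond [RHS]big_seq_cond.
have [] : 0 < \prod_(i <- r | (i \in r) && P i) F i /\
   \sum_(i <- r | (i \in r) && P i) logn p (F i) =
   logn p (\prod_(i <- r | (i \in r) && P i) F i); last by move=> _ ->.
apply: (big_rec2 (fun s pr => 0 < pr /\ s = logn p pr)); first by rewrite logn1.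
move=> i s pr /andP[ir Pi] [pr0 ->]; have Fi := H i ir Pi.
by rewrite muln_gt0 Fi pr0 lognM.
Qed.

Lemma logn_sum p n h : prime p -> 0 < h -> h <= n ->
  logn p h = \sum_(1 <= b < (trunc_log p n).+1) (p ^ b %| h).
Proof.
move=> pP h0 hn; pose L := logn p h; pose T := trunc_log p n.
have LT : L <= T.
  apply: trunc_log_max; first exact: prime_gt1.
  apply: leq_trans hn; apply: dvdn_leq => //; exact: pfactor_dvdnn.
rewrite (@big_cat_nat _ _ _ L.+1) //=.
rewrite (eq_big_nat _ _ (F2 := fun=> 1)); last first.
  by move=> b /andP[_ bL]; rewrite pfactor_dvdn // -ltnS bL.
rewrite [X in _ + X](eq_big_nat _ _ (F2 := fun=> 0)); last first.
  by move=> b /andP[bL _]; rewrite pfactor_dvdn // leqNgt bL.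
by rewrite !sum_nat_const_nat muln0 addn0 muln1 subn1.
Qed.

Lemma reindex_dvd q n (F : nat -> nat) : 0 < q ->
  \sum_(1 <= h < n.+1 | q %| h) F h = \sum_(1 <= a < (n %/ q).+1) F (a * q).
Proof.
move=> q0; elim: n => [|n IH]; first by rewrite div0n !big_geq.
rewrite big_mkcond big_nat_recr //= -big_mkcond IH divnS //.
case qn: (q %| n.+1) => /=; last by rewrite addn0.
rewrite add1n [RHS]big_nat_recr //=; congr (_ + F _).
by rewrite -{1}(divnK qn) divnS // qn.
Qed.

Lemma main_nat p n : prime p -> 1 <= n ->
  logn p (farey_num_prod n) =
  \sum_(1 <= b < (trunc_log p n).+1) \sum_(1 <= a < (n %/ p ^ b).+1)
    (totient (a * p ^ b) * (n %/ (a * p ^ b) - 1) + cnt (a * p) (n %% (a * p ^ b))).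
Proof.
move=> pP n1; pose T := trunc_log p n.
have p0 := prime_gt0 pP.
rewrite /farey_num_prod logn_prod; last first.
  move=> k _ _; rewrite big_seq_cond; apply: prodn_cond_gt0 => h /andP[].
  by rewrite mem_index_iota => /andP[].
have E1 : forall k, 1 <= k < n.+1 ->
    logn p (\prod_(1 <= h < k.+1 | coprime h k) h) =
    \sum_(1 <= h < n.+1) \sum_(1 <= b < T.+1)
       ((h <= k) && coprime h k) * (p ^ b %| h).
  move=> k /andP[k1 kn]; rewrite logn_prod; last first.
    by move=> h; rewrite mem_index_iota => /andP[].
  transitivity (\sum_(1 <= h < k.+1 | coprime h k)
                  \sum_(1 <= b < T.+1) (p ^ b %| h)).
    rewrite big_seq_cond [RHS]big_seq_cond; apply: eq_bigr => h /andP[].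
    rewrite mem_index_iota => /andP[h1 hk] _; apply: logn_sum => //.
    exact: leq_trans hk kn.
  rewrite (@big_nat_widen _ _ _ _ _ n.+1) //.
  rewrite big_mkcond; apply: eq_big_nat => h _.
  rewrite -big_distrr /= ltnS andbC.
  by case: (_ && _); rewrite ?mul1n ?mul0n.
rewrite (eq_big_nat _ _ E1).
rewrite exchange_big /=.
under eq_bigr do rewrite exchange_big /=.
rewrite exchange_big /=.
apply: eq_big_nat => b /andP[b1 _].
have pb0 : 0 < p ^ b by rewrite expn_gt0 p0.
have pb1 : 1 < p ^ b.
  rewrite (leq_trans (prime_gt1 pP)) // -{1}(expn1 p) leq_pexp2l //.
under eq_bigr do rewrite -big_distrl /=.
transitivity (\sum_(1 <= h < n.+1 | p ^ b %| h)
                \sum_(1 <= k < n.+1) ((h <= k) && coprime h k)).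
  rewrite [RHS]big_mkcond; apply: eq_bigr => h _.
  by case: (p ^ b %| h); rewrite ?muln1 ?muln0.
rewrite reindex_dvd //; apply: eq_big_nat => a /andP[a1 aq].
have an : a * p ^ b <= n by rewrite -leq_divRL // -ltnS.
have a2 : 1 < a * p ^ b by apply: leq_trans pb1 _; rewrite leq_pmull.
rewrite G_eq //; congr (_ + _).
rewrite /cnt; apply: eq_bigr => k _.
by rewrite !coprimeMl coprime_pexpl.
Qed.
Local Open Scope ring_scope.

Lemma PoszS (I : Type) (r : seq I) (P : pred I) (F : I -> nat) :
  (\sum_(i <- r | P i) F i)%N%:Z = (\sum_(i <- r | P i) (F i)%:Z)%R.
Proof. exact: (big_morph Posz PoszD (erefl 0%:Z)). Qed.

Lemma count_div d j : (0 < j)%N -> (d %/ j = \sum_(1 <= k < d.+1) (j %| k))%N.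
Proof.
move=> j0; elim: d => [|d IH]; first by rewrite div0n big_geq.
by rewrite big_nat_recr //= divnS // IH addnC.
Qed.

Lemma mobius_count r d : (0 < r)%N ->
  (\sum_(j <- divisors r) moebius j * (d %/ j)%N%:Z)%R =
  (\sum_(1 <= k < d.+1) coprime r k)%N%:Z.
Proof.
move=> r0.
rewrite big_seq.
under eq_bigr => j jr.
  rewrite (@count_div d j); last first.
    by move: jr; rewrite -dvdn_divisors // => /dvdn_gt0; apply.
  rewrite PoszS mulr_sumr.
over.
rewrite /= -big_seq exchange_big PoszS /=; apply: eq_bigr => k _.
have -> : (\sum_(j <- divisors r) moebius j * (j %| k)%N%:Z =
           \sum_(j <- divisors (gcdn r k)) moebius j)%R.
  transitivity (\sum_(j <- divisors r | (j %| k)%N) moebius j).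
    rewrite [RHS]big_mkcond /=; apply: eq_bigr => j _.
    by case: (j %| k)%N; rewrite ?mulr1 ?mulr0.
  rewrite -big_filter; apply: perm_big.
  apply: uniq_perm; rewrite ?divisors_uniq ?filter_uniq ?divisors_uniq //.
  move=> x; rewrite mem_filter -!dvdn_divisors ?gcdn_gt0 ?r0 //.
  by rewrite dvdn_gcd andbC.
have g0 : (0 < gcdn r k)%N by rewrite gcdn_gt0 r0.
rewrite /coprime; have [g1|g1] := boolP (gcdn r k == 1)%N.
  by rewrite (eqP g1) /= big_cons big_nil addr0.
rewrite sum_moebius //.
by rewrite ltn_neqAle eq_sym g1.
Qed.

Theorem lemma4p3 (p n : nat) : prime p -> (1 <= n)%N ->
  (logn p (farey_num_prod n))%:Z =
  \sum_(1 <= b < (trunc_log p n).+1)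
    \sum_(1 <= a < (n %/ (p ^ b)).+1)
      ( ((totient (a * p ^ b))%:Z * ((n %/ (a * p ^ b))%:Z - 1))
        + \sum_(j <- divisors (a * p)) moebius j *
             ((n %% (a * p ^ b)) %/ j)%N%:Z ).
Proof.
move=> pP n1; have p0 := prime_gt0 pP.
rewrite main_nat // PoszS; apply: eq_big_nat => b /andP[b1 _].
rewrite PoszS; apply: eq_big_nat => a /andP[a1 aq].
have pb0 : (0 < p ^ b)%N by rewrite expn_gt0 p0.
have an : (a * p ^ b <= n)%N by rewrite -leq_divRL // -ltnS.
have q1 : (1 <= n %/ (a * p ^ b))%N by rewrite divn_gt0 ?muln_gt0 ?a1.
rewrite PoszD PoszM mobius_count ?muln_gt0 ?p0 ?a1 //.
by rewrite subzn.
Qed.
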